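(* Let $\mathbf c$ be a cluster in $\mathrm{CEG}(\mathcal Q)$ and let $i\neq j$ be vertices of $Q_{\mathbf c}$, with local twists $t_i,t_j$ at $\mathbf c$. If there is no arrow between $i$ and $j$ in $Q_{\mathbf c}$, then $t_it_j=t_jt_i$ in $\pi_1(\mathrm{ceg}(\mathcal Q),\mathbf c)$. If there is exactly one arrow between $i$ and $j$, then $t_it_jt_i=t_jt_it_j$ in $\pi_1(\mathrm{ceg}(\mathcal Q),\mathbf c)$.
   Context: Let $(Q,W)$ be a non-degenerate quiver with potential: $Q$ has no loops or oriented 2-cycles and every quiver with potential obtained from it by iterated Derksen–Weyman–Zelevinsky mutation again has none (so underlying quivers change by ordinary quiver mutation). Let $\Gamma=\Gamma(Q,W)$ be its Ginzburg dg algebra (degree 3, assumed Jacobi-finite) and $\mathcal C(\Gamma)=\operatorname{per}\Gamma/D_{fd}(\Gamma)$ its (Amiot) cluster category. A cluster is a cluster tilting set in $\mathcal C(\Gamma)$; each object of a cluster can be mutated; $Q_{\mathbf c}$ denotes the Gabriel quiver of $\operatorname{End}(\bigoplus_{M\in\mathbf c}M)$, whose vertices are the objects of $\mathbf c$, and mutation of clusters induces quiver mutation. The canonical cluster $\mathbf c_\Gamma$ is the image of the indecomposable summands of $\Gamma$ ($Q_{\mathbf c_\Gamma}=Q$). Let $\mathcal Q$ be the mutation class of $(Q,W)$. The unoriented cluster exchange graph $\underline{\mathrm{CEG}}(\mathcal Q)$ has vertices the clusters reachable from $\mathbf c_\Gamma$ by iterated mutation and edges the mutations; the oriented cluster exchange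 graph $\mathrm{CEG}(\mathcal Q)$ replaces each edge $\mathbf c - \mu_i\mathbf c$ by the two oriented edges $\mathbf c\to\mu_i\mathbf c$ and $\mu_i\mathbf c\to\mathbf c$ (forward mutations). Paths are composed left to right. The local twist $t_i$ at $\mathbf c$ (for a vertex $i$ of $Q_{\mathbf c}$) is the loop $\mathbf c\to\mu_i\mathbf c\to\mathbf c$ composed of the two forward mutations of the edge $\mu_i$. The cluster exchange groupoid $\mathrm{ceg}(\mathcal Q)$ is the quotient of the path groupoid of $\mathrm{CEG}(\mathcal Q)$ (objects the vertices; morphisms generated by the edges and their formal inverses) by the following relations, imposed for every cluster $\mathbf c$ and every ordered pair of distinct vertices $i,j$ of $Q_{\mathbf c}$ with no arrow from $i$ to $j$. Put $\mathbf c'=\mu_j\mathbf c$ and consider the path $\mu_i\mathbf c - \mathbf c - \mathbf c' - \mu_i\mathbf c'$ in $\underline{\mathrm{CEG}}$; write $x$ for each forward mutation in the direction $\mu_i\mathbf c\to\mathbf c\to\mathbf c'\to\mu_i\mathbf c'$ and $y$ for each forward mutation in the opposite direction (so at $\mathbf c$, $t_i=yx$ and $t_j=xy$). (1) Hexagonal relation: $x^2y=yx^2$ (as morphisms $\mathbf c\to\mathbf c'$). (2) If there is also no arrow from $j$ to $i$, the clusters $\mathbf c,\mu_j\mathbf c,\mu_i\mu_j\mathbf c=\mu_j\mu_i\mathbf c,\mu_i\mathbf c$ form a 4-cycle; labelling by $x$ the forward mutations around it in the direction starting $\mathbf c\to\mu_j\mathbf c$ and by $y$ those in the other direction, impose $x^2=y^2$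 (paths from $\mathbf c$). (3) If there is exactly one arrow from $j$ to $i$, the clusters obtained from $\mathbf c$ by alternately mutating at $i$ and $j$ form a 5-cycle; with the analogous labelling impose $x^2=y^3$ (paths from $\mathbf c$). *)

(* Defs.v *)
From mathcomp Require Import all_boot.
Set Implicit Arguments. Unset Strict Implicit. Unset Printing Implicit Defensive.

(* An abstract (oriented) cluster exchange graph, modelled on CEG(Q) of a
   non-degenerate quiver with potential. *)
Record ExchangeGraph := {
  Obj : eqType;
  Cl : Type;
  inc : Cl -> Obj -> bool;
  mu : Cl -> Obj -> Cl;
  ex : Cl -> Obj -> Obj;
  arr : Cl -> Obj -> Obj -> nat;
  base : Cl;
  reach_all : forall P : Cl -> Prop, P base ->
      (forall c x, P c -> inc c x -> P (mu c x)) -> forall c, P c;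
  inc_mu : forall c k y, inc c k ->
      inc (mu c k) y = (y == ex c k) || (inc c y && (y != k));
  ex_new : forall c k, inc c k -> ~~ inc c (ex c k);
  mu_inv : forall c k, inc c k -> mu (mu c k) (ex c k) = c;
  ex_inv : forall c k, inc c k -> ex (mu c k) (ex c k) = k;
  arr_supp : forall c x y, 0 < arr c x y -> inc c x && inc c y;
  no_loop : forall c x, arr c x x = 0;
  no_2cyc : forall c x y, arr c x y = 0 \/ arr c y x = 0;
  (* mutation of clusters induces (Fomin-Zelevinsky) quiver mutation *)
  arr_mu : forall c k x y, inc c k -> inc (mu c k) x -> inc (mu c k) y ->
      arr (mu c k) x y =
        if x == ex c k then (if y == ex c k then 0 else arr c y k)
        else if y == ex c k then arr c k x
        else (arr c x y + arr c x k * arr c k y)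
               - (arr c y x + arr c y k * arr c k x);
  square : forall c i j, inc c i -> inc c j -> i != j ->
      arr c i j = 0 -> arr c j i = 0 -> mu (mu c j) i = mu (mu c i) j;
  pentagon : forall c i j, inc c i -> inc c j -> i != j ->
      arr c i j = 0 -> arr c j i = 1 ->
      let c1 := mu c j in let j1 := ex c j in
      let c2 := mu c1 i in let i1 := ex c1 i in
      let c3 := mu c2 j1 in let j2 := ex c2 j1 in
      let c4 := mu c3 i1 in
      mu c4 j2 = c
}.

Section Groupoid.
Variable D : ExchangeGraph.

(* A letter (c, x, false) is the forward mutation c -> mu c x (x in c);
   (c, x, true) is its formal inverse. *)
Definition letter := (Cl D * Obj D * bool)%type.
Definition src (l : letter) : Cl D :=
  let: (c, x, b) := l in if b then mu c x else c.
Definition tgt (l : letter) : Cl D :=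
  let: (c, x, b) := l in if b then c else mu c x.
Definition fe (c : Cl D) (x : Obj D) : letter := (c, x, false).
Definition ie (c : Cl D) (x : Obj D) : letter := (c, x, true).

(* w is a path in the path groupoid of CEG from a to b (composed left to right) *)
Fixpoint is_path (a : Cl D) (w : seq letter) (b : Cl D) : Prop :=
  match w with
  | [::] => a = b
  | l :: w' => inc l.1.1 l.1.2 /\ src l = a /\ is_path (tgt l) w' b
  end.

Definition twist (c : Cl D) (i : Obj D) : seq letter :=
  [:: fe c i; fe (mu c i) (ex c i)].

(* defining relations of the path groupoid and of ceg(Q) (one direction) *)
Inductive rel0 : seq letter -> seq letter -> Prop :=
  | rel_cancel_r c x : inc c x -> rel0 [:: fe c x; ie c x] [::]
  | rel_cancel_l c x : inc c x -> rel0 [:: ie c x; fe c x] [::]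
  | rel_hex c i j : inc c i -> inc c j -> i != j -> arr c i j = 0 ->
      let c' := mu c j in
      rel0 [:: fe c j; fe c' i; fe (mu c' i) (ex c' i)]
           [:: fe c i; fe (mu c i) (ex c i); fe c j]
  | rel_square c i j : inc c i -> inc c j -> i != j ->
      arr c i j = 0 -> arr c j i = 0 ->
      rel0 [:: fe c j; fe (mu c j) i] [:: fe c i; fe (mu c i) j]
  | rel_pent c i j : inc c i -> inc c j -> i != j ->
      arr c i j = 0 -> arr c j i = 1 ->
      let c1 := mu c j in let j1 := ex c j in
      let c2 := mu c1 i in let i1 := ex c1 i in
      let c3 := mu c2 j1 in let j2 := ex c2 j1 in
      let c4 := mu c3 i1 in
      rel0 [:: fe c j; fe c1 i]
           [:: fe c (ex c4 j2); fe c4 (ex c3 i1); fe c3 (ex c2 j1)].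

Definition rel1 (u v : seq letter) : Prop := rel0 u v \/ rel0 v u.

Definition step (w w' : seq letter) : Prop :=
  exists p s u v, rel1 u v /\ w = p ++ u ++ s /\ w' = p ++ v ++ s.

(* equality of morphisms a -> b in ceg(Q): the equivalence on paths a -> b
   generated by (contextual) application of the defining relations *)
Inductive ceg_eq (a b : Cl D) : seq letter -> seq letter -> Prop :=
  | ceg_refl w : is_path a w b -> ceg_eq a b w w
  | ceg_step w w' w'' : ceg_eq a b w w' -> step w' w'' -> is_path a w'' b ->
      ceg_eq a b w w''.

End Groupoid.

(* Main.v *)
Require Import Defs.
From mathcomp Require Import all_boot.
From mathcomp Require Import zify.

Set Implicit Arguments. Unset Strict Implicit. Unset Printing Implicit Defensive.

Section Gen.
Variable D : ExchangeGraph.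

Lemma chain (a b : Cl D) w w' w'' p s u v :
  ceg_eq a b w w' -> rel1 u v -> w' = p ++ u ++ s -> w'' = p ++ v ++ s ->
  is_path a w'' b -> ceg_eq a b w w''.
Proof. move=> H R e1 e2 P; apply: ceg_step H _ P; by exists p, s, u, v. Qed.

Lemma ceg_path1 (a b : Cl D) w w' : ceg_eq a b w w' -> is_path a w b.
Proof. by elim. Qed.

Lemma ceg_path2 (a b : Cl D) w w' : ceg_eq a b w w' -> is_path a w' b.
Proof. by case. Qed.

Lemma ceg_trans (a b : Cl D) u v w :
  ceg_eq a b u v -> ceg_eq a b v w -> ceg_eq a b u w.
Proof.
move=> H1 H2; elim: H2 H1 => // w0 w1 w2 _ IH st P H1.
exact: ceg_step (IH H1) st P.
Qed.

Lemma ceg_sym (a b : Cl D) u v : ceg_eq a b u v -> ceg_eq a b v u.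
Proof.
elim=> [w P|w w' w'' H IH st P]; first exact: ceg_refl.
apply: ceg_trans IH.
apply: ceg_step (ceg_refl P) _ (ceg_path2 H).
case: st => p [s [u0 [v0 [R [e1 e2]]]]].
exists p, s, v0, u0; split=> //; case: R; by [left|right].
Qed.

Lemma neq_inc (c : Cl D) x y : inc c x -> ~~ inc c y -> x != y.
Proof. by move=> hx hy; apply/eqP => e; move: hy; rewrite -e hx. Qed.

End Gen.

Section Core.
Variable D : ExchangeGraph.
Variables (c c1 c2 c3 c4 : Cl D) (i j i1 j1 i2 j2 : Obj D).
Local Notation a0 := (fe c j).
Local Notation b0 := (fe c1 j1).
Local Notation a1 := (fe c1 i).
Local Notation b1 := (fe c2 i1).
Local Notation a2 := (fe c2 j1).
Local Notation b2 := (fe c3 j2).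
Local Notation a3 := (fe c3 i1).
Local Notation b3 := (fe c4 i2).
Local Notation a4 := (fe c4 j2).
Local Notation b4 := (fe c i).
Hypotheses (m0 : mu c j = c1) (m1 : mu c1 i = c2) (m2 : mu c2 j1 = c3)
  (m3 : mu c3 i1 = c4) (m4 : mu c4 j2 = c)
  (n0 : mu c1 j1 = c) (n1 : mu c2 i1 = c1) (n2 : mu c3 j2 = c2)
  (n3 : mu c4 i2 = c3) (n4 : mu c i = c4).
Hypotheses (k0 : inc c j) (k1 : inc c1 i) (k2 : inc c2 j1) (k3 : inc c3 i1)
  (k4 : inc c4 j2) (l0 : inc c1 j1) (l1 : inc c2 i1) (l2 : inc c3 j2)
  (l3 : inc c4 i2) (l4 : inc c i).
Hypotheses (hex0 : rel0 [:: a0; a1; b1] [:: b4; a4; a0])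
  (hex1 : rel0 [:: a1; a2; b2] [:: b0; a0; a1])
  (hex3 : rel0 [:: a3; a4; b4] [:: b2; a2; a3])
  (hex4 : rel0 [:: a4; a0; b0] [:: b3; a3; a4])
  (pent0 : rel0 [:: a0; a1] [:: b4; b3; b2])
  (pent3 : rel0 [:: a3; a4] [:: b2; b1; b0]).

Ltac sp := rewrite /= ?m0 ?m1 ?m2 ?m3 ?m4 ?n0 ?n1 ?n2 ?n3 ?n4; repeat split; assumption.

Lemma core : ceg_eq c c [:: b4; a4; a0; b0; b4; a4] [:: a0; b0; b4; a4; a0; b0].
Proof.
apply: (@chain _ c c _ [:: a0; b0; a0; a1; b1; b0] _ [:: a0; b0] [:: b0]
   [:: a0; a1; b1] [:: b4; a4; a0]); [|by left|by []|by []|sp].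
apply: (@chain _ c c _ [:: a0; a1; a2; b2; b1; b0] _ [:: a0] [:: b1; b0]
   [:: a1; a2; b2] [:: b0; a0; a1]); [|by left|by []|by []|sp].
apply: (@chain _ c c _ [:: a0; a1; a2; a3; a4] _ [:: a0; a1; a2] [::]
   [:: a3; a4] [:: b2; b1; b0]); [|by left|by []|by []|sp].
apply: (@chain _ c c _ [:: b4; b3; b2; a2; a3; a4] _ [::] [:: a2; a3; a4]
   [:: b4; b3; b2] [:: a0; a1]); [|by right|by []|by []|sp].
apply: (@chain _ c c _ [:: b4; b3; a3; a4; b4; a4] _ [:: b4; b3] [:: a4]
   [:: a3; a4; b4] [:: b2; a2; a3]); [|by left|by []|by []|sp].
apply: (@chain _ c c _ [:: b4; a4; a0; b0; b4; a4] _ [:: b4] [:: b4; a4]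
   [:: a4; a0; b0] [:: b3; a3; a4]); [|by left|by []|by []|sp].
apply: ceg_refl; sp.
Qed.
End Core.

Section Main.
Variable D : ExchangeGraph.

Lemma neq_inc' (c : Cl D) x y : inc c x -> ~~ inc c y -> y != x.
Proof. by move=> hx hy; rewrite eq_sym; apply: neq_inc hx hy. Qed.

Lemma braid (c : Cl D) (i j : Obj D) :
  inc c i -> inc c j -> i != j -> arr c i j = 0 -> arr c j i = 1 ->
  ceg_eq c c (twist c i ++ twist c j ++ twist c i)
             (twist c j ++ twist c i ++ twist c j).
Proof.
move=> hi hj hij h0 h1.
pose c1 := mu c j; pose j1 := ex c j; pose c2 := mu c1 i; pose i1 := ex c1 i.
pose c3 := mu c2 j1; pose j2 := ex c2 j1; pose c4 := mu c3 i1; pose i2 := ex c3 i1.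
have hp : mu c4 j2 = c := pentagon hi hj hij h0 h1.
have nj1 : ~~ inc c j1 := ex_new hj.
have l0 : inc c1 j1 by rewrite inc_mu // eqxx.
have k1 : inc c1 i by rewrite inc_mu // hi hij orbT.
have ni1 : ~~ inc c1 i1 := ex_new k1.
have l1 : inc c2 i1 by rewrite inc_mu // eqxx.
have k2 : inc c2 j1 by rewrite inc_mu // l0 (neq_inc' hi nj1) orbT.
have nj2 : ~~ inc c2 j2 := ex_new k2.
have l2 : inc c3 j2 by rewrite inc_mu // eqxx.
have k3 : inc c3 i1 by rewrite inc_mu // l1 (neq_inc' l0 ni1) orbT.
have ni2 : ~~ inc c3 i2 := ex_new k3.
have l3 : inc c4 i2 by rewrite inc_mu // eqxx.
have k4 : inc c4 j2 by rewrite inc_mu // l2 (neq_inc' l1 nj2) orbT.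
have ne : ~~ inc c4 (ex c4 j2) := ex_new k4.
have incc : forall y, inc c y = (y == ex c4 j2) || (inc c4 y && (y != j2)).
  by move=> y; rewrite -{1}hp inc_mu.
have chain3 : forall y, inc c y -> y != i -> y != j -> inc c3 y && (y != i1).
  move=> y hy yi yj.
  have y1 : inc c1 y by rewrite inc_mu // hy yj orbT.
  have y2 : inc c2 y by rewrite inc_mu // y1 yi orbT.
  by rewrite inc_mu // y2 (neq_inc hy nj1) orbT (neq_inc y1 ni1).
have hmu' : mu c (ex c4 j2) = c4 by rewrite -{1}hp mu_inv.
have nj1c4 : ~~ inc c4 j1.
  apply/negP => h; move: nj1; rewrite incc h (neq_inc k2 nj2) orbT //.
have he : ex c4 j2 = i.
  have hce : inc c (ex c4 j2) by rewrite incc eqxx.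
  case: (eqVneq (ex c4 j2) i) => // ei.
  case: (eqVneq (ex c4 j2) j) => ej.
    by move: nj1c4; rewrite -hmu' ej l0.
  have h3 := chain3 _ hce ei ej.
  by move: ne; rewrite inc_mu // h3 orbT.
have hi2 : i2 = j.
  have hc2 : inc c i2 by rewrite incc l3 (neq_inc' l2 ni2) orbT.
  case: (eqVneq i2 j) => // ej.
  case: (eqVneq i2 i) => ei.
    by move: ne; rewrite he -ei l3.
  by have := chain3 _ hc2 ei ej; rewrite (negbTE ni2).
have n0 : mu c1 j1 = c := mu_inv hj.
have n1 : mu c2 i1 = c1 := mu_inv k1.
have n2 : mu c3 j2 = c2 := mu_inv k2.
have n3 : mu c4 i2 = c3 := mu_inv k3.
have e0 : ex c1 j1 = j := ex_inv hj.
have e2 : ex c3 j2 = j1 := ex_inv k2.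
have e3 : ex c4 i2 = i1 := ex_inv k3.
have n4 : mu c i = c4 by rewrite -hp -{1}he mu_inv.
have e4 : ex c i = j2 by rewrite -hp -{1}he ex_inv.
have r1 : arr c1 j1 i = 0.
  by rewrite /c1 arr_mu // eqxx (negbTE (neq_inc hi nj1)).
have r2 : arr c2 i1 j1 = 0.
  by rewrite /c2 arr_mu // eqxx (negbTE (neq_inc l0 ni1)).
have r3 : arr c3 j2 i1 = 0.
  by rewrite /c3 arr_mu // eqxx (negbTE (neq_inc l1 nj2)).
have r4 : arr c4 i2 j2 = 0.
  by rewrite /c4 arr_mu // eqxx (negbTE (neq_inc l2 ni2)).
have s1 : arr c1 i j1 = 1.
  by rewrite /c1 arr_mu // eqxx (negbTE (neq_inc hi nj1)).
have s2 : arr c2 j1 i1 = 1.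
  by rewrite /c2 arr_mu // eqxx (negbTE (neq_inc l0 ni1)).
have s3 : arr c3 i1 j2 = 1.
  by rewrite /c3 arr_mu // eqxx (negbTE (neq_inc l1 nj2)).
have hx0 : rel0 [:: fe c j; fe c1 i; fe c2 i1] [:: fe c i; fe c4 j2; fe c j].
  by have := rel_hex hi hj hij h0; rewrite /= n4 e4.
have hx1 : rel0 [:: fe c1 i; fe c2 j1; fe c3 j2] [:: fe c1 j1; fe c j; fe c1 i].
  have H : rel0 [:: fe c1 i; fe c2 j1; fe (mu c2 j1) (ex c2 j1)]
     [:: fe c1 j1; fe (mu c1 j1) (ex c1 j1); fe c1 i] :=
    rel_hex l0 k1 (neq_inc' hi nj1) r1.
  by rewrite n0 e0 in H.
have hx3 : rel0 [:: fe c3 i1; fe c4 j2; fe c i] [:: fe c3 j2; fe c2 j1; fe c3 i1].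
  have H : rel0 [:: fe c3 i1; fe c4 j2; fe (mu c4 j2) (ex c4 j2)]
     [:: fe c3 j2; fe (mu c3 j2) (ex c3 j2); fe c3 i1] :=
    rel_hex l2 k3 (neq_inc' l1 nj2) r3.
  by rewrite hp he n2 e2 in H.
have hx4 : rel0 [:: fe c4 j2; fe c j; fe c1 j1] [:: fe c4 i2; fe c3 i1; fe c4 j2].
  have H : rel0 [:: fe c4 j2; fe (mu c4 j2) i2; fe (mu (mu c4 j2) i2) (ex (mu c4 j2) i2)]
     [:: fe c4 i2; fe (mu c4 i2) (ex c4 i2); fe c4 j2] :=
    rel_hex l3 k4 (neq_inc' l2 ni2) r4.
  rewrite n3 e3 hp in H.
  by rewrite [in X in rel0 X _]hi2 in H.
have hp0 : rel0 [:: fe c j; fe c1 i] [:: fe c i; fe c4 i2; fe c3 j2].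
  have H : rel0 [:: fe c j; fe c1 i] [:: fe c (ex c4 j2); fe c4 (ex c3 i1); fe c3 (ex c2 j1)] :=
    rel_pent hi hj hij h0 h1.
  by rewrite he in H.
have hp3 : rel0 [:: fe c3 i1; fe c4 j2] [:: fe c3 j2; fe c2 i1; fe c1 j1].
  have H : rel0 [:: fe c3 i1; fe c4 j2]
    [:: fe c3 (ex (mu (mu (mu c4 j2) i2) (ex c4 j2)) (ex (mu c4 j2) i2));
        fe (mu (mu (mu c4 j2) i2) (ex c4 j2)) (ex (mu (mu c4 j2) i2) (ex c4 j2));
        fe (mu (mu c4 j2) i2) (ex (mu c4 j2) i2)] :=
    rel_pent l2 k3 (neq_inc' l1 nj2) r3 s3.
  by rewrite hp he hi2 in H.
rewrite /twist n4 e4 /=.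
exact: (@core D c c1 c2 c3 c4 i j i1 j1 i2 j2).
Qed.

Lemma commute (c : Cl D) (i j : Obj D) :
  inc c i -> inc c j -> i != j -> arr c i j = 0 -> arr c j i = 0 ->
  ceg_eq c c (twist c i ++ twist c j) (twist c j ++ twist c i).
Proof.
move=> hi hj hij h0 h1.
pose c1 := mu c j; pose j1 := ex c j; pose c2 := mu c1 i; pose i1 := ex c1 i.
have nj1 : ~~ inc c j1 := ex_new hj.
have l0 : inc c1 j1 by rewrite inc_mu // eqxx.
have k1 : inc c1 i by rewrite inc_mu // hi hij orbT.
have l1 : inc c2 i1 by rewrite inc_mu // eqxx.
have n0 : mu c1 j1 = c := mu_inv hj.
have n1 : mu c2 i1 = c1 := mu_inv k1.
have ni : mu (mu c i) (ex c i) = c := mu_inv hi.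
have hci : inc (mu c i) (ex c i) by rewrite inc_mu // eqxx.
have r1 : arr c1 i j1 = 0.
  by rewrite /c1 arr_mu // eqxx (negbTE (neq_inc hi nj1)).
have hx0 : rel0 [:: fe c j; fe c1 i; fe c2 i1] [:: fe c i; fe (mu c i) (ex c i); fe c j]
  := rel_hex hi hj hij h0.
have hx1 : rel0 [:: fe c1 j1; fe c i; fe (mu c i) (ex c i)] [:: fe c1 i; fe c2 i1; fe c1 j1].
  have H : rel0 [:: fe c1 j1; fe (mu c1 j1) i; fe (mu (mu c1 j1) i) (ex (mu c1 j1) i)]
    [:: fe c1 i; fe (mu c1 i) (ex c1 i); fe c1 j1] :=
    rel_hex k1 l0 (neq_inc hi nj1) r1.
  by rewrite n0 in H.
rewrite /twist /=.
apply: (@chain _ c c _ [:: fe c j; fe c1 i; fe c2 i1; fe c1 j1] _ [:: fe c j] [::]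
   [:: fe c1 i; fe c2 i1; fe c1 j1] [:: fe c1 j1; fe c i; fe (mu c i) (ex c i)]);
  [|by right|by []|by []|rewrite /= ?ni ?n0; repeat split; assumption].
apply: (@chain _ c c _ [:: fe c i; fe (mu c i) (ex c i); fe c j; fe c1 j1] _ [::] [:: fe c1 j1]
   [:: fe c i; fe (mu c i) (ex c i); fe c j] [:: fe c j; fe c1 i; fe c2 i1]);
  [|by right|by []|by []|rewrite /= ?n0 ?n1; repeat split; assumption].
apply: ceg_refl; rewrite /= ?ni ?n0; repeat split; assumption.
Qed.
End Main.

Theorem mainTheorem1 (D : ExchangeGraph) (c : Cl D) (i j : Obj D) :
  inc c i -> inc c j -> i != j ->
  (arr c i j = 0 -> arr c j i = 0 ->
     ceg_eq c c (twist c i ++ twist c j) (twist c j ++ twist c i)) /\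
  (arr c i j + arr c j i = 1 ->
     ceg_eq c c (twist c i ++ twist c j ++ twist c i)
             (twist c j ++ twist c i ++ twist c j)).
Proof.
move=> hi hj hij; split; first exact: commute.
move=> hs.
have [[h0 h1]|[h0 h1]] : (arr c i j = 0 /\ arr c j i = 1) \/ (arr c j i = 0 /\ arr c i j = 1)
  by lia.
  exact: braid.
apply: ceg_sym; apply: braid => //; by rewrite eq_sym.
Qed.
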